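(* Let $I=(a..c)$ be a conserved interval of $\mathcal{P}$, and let $F$ and $F'$ be two sets of frontiers of $I$. Then $F\cup F'$ is also a set of frontiers of $I$.
   Context: Let $n\geq 2$ and let $\mathcal{P}=\{P_1,\ldots,P_K\}$ be signed permutations of $\{1,\ldots,n\}$: each $P_k$ is an ordering of $1,\ldots,n$ in which each element carries a sign $+$ or $-$. Assume $P_1=(+1,+2,\ldots,+n)$ and that every $P_k$ has first element $+1$ and last element $+n$. For integers $i\leq j$ write $(i..j)=\{i,\ldots,j\}$. A conserved interval of $\mathcal{P}$ is either a singleton, or a set $(a..c)$ with $a<c$ which (ignoring signs) occupies consecutive positions in every $P_k$ and which, in every $P_k$, has either $+a$ at its left end and $+c$ at its right end, or $-c$ at its left end and $-a$ at its right end. For a conserved interval $I=(a..c)$, a set $\{f_1,\ldots,f_k\}$ with $a=f_1<f_2<\cdots<f_k=c$ is a set of frontiers of $I$ if $(f_i..f_j)$ is a conserved interval for all $1\leq i<j\leq k$. *)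

(* Defs.v *)
From mathcomp Require Import all_boot.
Set Implicit Arguments. Unset Strict Implicit. Unset Printing Implicit Defensive.

(* A signed element: (true, x) is +x, (false, x) is -x. *)
Definition selt := (bool * nat)%type.

Definition signed_perm (n : nat) (p : seq selt) : Prop :=
  perm_eq (map snd p) (iota 1 n).

Definition id_sperm (n : nat) : seq selt := map (fun x => (true, x)) (iota 1 n).

Definition valid_family (n : nat) (Ps : seq (seq selt)) : Prop :=
  [/\ 2 <= n,
      ohead Ps = Some (id_sperm n),
      (forall p, p \in Ps -> signed_perm n p) &
      (forall p, p \in Ps -> ohead p = Some (true, 1) /\ last (true, 0) p = (true, n))].

(* (a..c), a < c, occupies consecutive positions in p (ignoring signs), with
   either +a at its left end and +c at its right end, or -c at the left end
   and -a at the right end. *)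
Definition conserved_in (p : seq selt) (a c : nat) : Prop :=
  exists i, let b := take (c - a).+1 (drop i p) in
    size b = (c - a).+1 /\ perm_eq (map snd b) (iota a (c - a).+1) /\
    ((head (true, 0) b = (true, a) /\ last (true, 0) b = (true, c)) \/
     (head (true, 0) b = (false, c) /\ last (true, 0) b = (false, a))).

Definition conserved (n : nat) (Ps : seq (seq selt)) (a c : nat) : Prop :=
  (a = c /\ 1 <= a <= n) \/
  (a < c /\ forall p, p \in Ps -> conserved_in p a c).

Definition frontiers (n : nat) (Ps : seq (seq selt)) (a c : nat) (F : seq nat) : Prop :=
  [/\ a \in F, c \in F,
      (forall f, f \in F -> a <= f <= c) &
      (forall f g, f \in F -> g \in F -> f < g -> conserved n Ps f g)].

(* Main.v *)
Require Import Defs.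
From mathcomp Require Import all_boot.
From mathcomp Require Import zify.
Set Implicit Arguments.

Lemma block_mem (s : seq nat) i k z : uniq s ->
  (z \in take k (drop i s)) = (z \in s) && (i <= index z s < i + k).
Proof.
move=> us; apply/idP/idP.
- move=> H; have Hs : z \in s by apply: mem_drop (mem_take H).
  rewrite Hs /=.
  case/(nthP 0): H => j; rewrite size_take_min size_drop => Hj.
  rewrite nth_take; last by lia.
  rewrite nth_drop => Hn.
  have Hij : i + j < size s.
    have {}Hj : j < minn k (size s - i) := Hj; clear -Hj; lia.
  have := index_uniq 0 Hij us; rewrite Hn => ->; lia.
- case/andP=> Hs Hi; apply/(nthP 0); exists (index z s - i).
    rewrite size_take_min size_drop; have := index_mem z s; rewrite Hs; lia.
  rewrite nth_take; last by lia.
  rewrite nth_drop subnKC ?nth_index //; lia.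
Qed.

Definition x0 : selt := (true, 0).

Lemma endp (h r : selt) (f' f g g' : nat) : f' <= f -> f < g -> g <= g' ->
  [\/ h = (true,f'), h = (false,g), h = (true,f) | h = (false,g')] ->
  [\/ r = (true,g), r = (false,f'), r = (true,g') | r = (false,f)] ->
  f <= h.2 <= g -> f <= r.2 <= g -> h.2 != r.2 ->
  (h = (true,f) /\ r = (true,g)) \/ (h = (false,g) /\ r = (false,f)).
Proof.
move=> h1 h2 h3 H1 H2; case: H1 => ->; case: H2 => -> /= => V1 V2 /eqP D;
  try (first [left; split; f_equal; lia | right; split; f_equal; lia | exfalso; lia]).
Qed.

Lemma decode (p : seq selt) (x y : nat) : uniq (map snd p) -> x <= y -> conserved_in p x y ->
 exists i, [/\ i + (y-x).+1 <= size p,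
   (forall z : nat, (z \in map snd p) && (i <= index z (map snd p) < i + (y-x).+1) = (x <= z <= y)) &
   ((nth x0 p i = (true,x) /\ nth x0 p (i + (y-x)) = (true,y)) \/
    (nth x0 p i = (false,y) /\ nth x0 p (i+(y-x)) = (false,x)))].
Proof.
move=> us xy [i [Hsz [Hperm Hend]]]; exists i.
have Hle : i + (y-x).+1 <= size p.
  move: Hsz; rewrite size_take_min size_drop. lia.
have Hh : head x0 (take (y-x).+1 (drop i p)) = nth x0 p i
  by rewrite -nth0 nth_take // nth_drop addn0.
have Hl : last x0 (take (y-x).+1 (drop i p)) = nth x0 p (i + (y-x))
  by rewrite -nth_last Hsz /= nth_take // nth_drop.
split => //.
- move=> z; rewrite -block_mem // -map_drop -map_take (perm_mem Hperm) mem_iota.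
  by apply/idP/idP; lia.
- by rewrite -Hh -Hl.
Qed.

Lemma encode (p : seq selt) (x y i : nat) : uniq (map snd p) -> x <= y -> i + (y-x).+1 <= size p ->
   (forall z : nat, (z \in map snd p) && (i <= index z (map snd p) < i + (y-x).+1) = (x <= z <= y)) ->
   ((nth x0 p i = (true,x) /\ nth x0 p (i + (y-x)) = (true,y)) \/
    (nth x0 p i = (false,y) /\ nth x0 p (i+(y-x)) = (false,x))) ->
   conserved_in p x y.
Proof.
move=> us xy Hle M E; exists i.
have Hsz : size (take (y-x).+1 (drop i p)) = (y-x).+1
  by rewrite size_takel // size_drop; lia.
have Hh : head x0 (take (y-x).+1 (drop i p)) = nth x0 p i
  by rewrite -nth0 nth_take // nth_drop addn0.
have Hl : last x0 (take (y-x).+1 (drop i p)) = nth x0 p (i + (y-x))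
  by rewrite -nth_last Hsz /= nth_take // nth_drop.
split => //; split; last by rewrite /x0 in Hh Hl; rewrite Hh Hl.
apply: uniq_perm.
- by rewrite map_take map_drop take_uniq // drop_uniq.
- exact: iota_uniq.
- move=> z; rewrite map_take map_drop block_mem // M mem_iota.
  by apply/idP/idP; lia.
Qed.

Lemma inter (p : seq selt) (f' f g g' : nat) : uniq (map snd p) ->
  f' <= f -> f < g -> g <= g' ->
  conserved_in p f' g -> conserved_in p f g' -> conserved_in p f g.
Proof.
move=> us h1 h2 h3 C1 C2.
have [i1 [S1 M1 E1]] := decode us (ltac:(lia) : f' <= g) C1.
have [i2 [S2 M2 E2]] := decode us (ltac:(lia) : f <= g') C2.
set s := map snd p in us M1 M2.
have Hs : size s = size p by rewrite size_map.
set i := maxn i1 i2.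
set j := minn (i1 + (g-f').+1) (i2 + (g'-f).+1).
have Mj : forall z : nat, (z \in s) && (i <= index z s < j) = (f <= z <= g).
  move=> z; move: (M1 z) (M2 z); rewrite /i /j.
  case: (z \in s) => /=; lia.
have Hij : j = i + (g-f).+1.
  have Hf := Mj f; have Hjs : j <= size s by rewrite Hs /j; lia.
  have Hfi : i < j by move: Hf; case: (f \in s) => /=; lia.
  have Hp : perm_eq (take (j - i) (drop i s)) (iota f (g-f).+1).
    apply: uniq_perm.
    - by rewrite take_uniq // drop_uniq.
    - exact: iota_uniq.
    - move=> z; rewrite block_mem // mem_iota subnKC; last by lia.
      by rewrite Mj; apply/idP/idP; lia.
  have := perm_size Hp; rewrite size_take_min size_drop size_iota.
  move: Hjs Hfi; move: (size s) => N; clear -N; lia.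
have Hi : i = i1 \/ i = i2 by rewrite /i /maxn; case: ltnP; auto.
have Hj : j = i1 + (g-f').+1 \/ j = i2 + (g'-f).+1 by rewrite /j /minn; case: ltnP; auto.
have Hj1 : j <= i1 + (g-f').+1 by rewrite /j geq_minl.
have Hj2 : j <= i2 + (g'-f).+1 by rewrite /j geq_minr.
have Hi1 : i1 <= i by rewrite /i leq_maxl.
have Hi2 : i2 <= i by rewrite /i leq_maxr.
clearbody i j; subst j.
have Hsp : i + (g-f).+1 <= size p by lia.
apply: (@encode p f g i us (ltac:(lia)) Hsp Mj).
have Vh : forall k, i <= k < i + (g-f).+1 -> f <= (nth x0 p k).2 <= g.
  move=> k Hk; have Hk' : k < size s by lia.
  rewrite -(nth_map x0 0) -/s; last by lia.
  by rewrite -Mj mem_nth //= index_uniq //; lia.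
have D : (nth x0 p i).2 != (nth x0 p (i + (g-f))).2.
  rewrite -!(nth_map x0 0) -/s; try lia.
  have a1 : i < size s by rewrite Hs; lia.
  have a2 : i + (g-f) < size s by rewrite Hs; lia.
  rewrite nth_uniq //; apply/eqP; lia.
apply: (@endp _ _ f' f g g' h1 h2 h3 _ _ (Vh i _) (Vh (i + (g-f)) _) D); try lia.
- case: Hi => ->.
  + by case: E1 => [[-> _]|[-> _]]; [apply: Or41 | apply: Or42].
  + by case: E2 => [[-> _]|[-> _]]; [apply: Or43 | apply: Or44].
- case: Hj => Hj.
  + have -> : i + (g-f) = i1 + (g-f') by lia.
    by case: E1 => [[_ ->]|[_ ->]]; [apply: Or41 | apply: Or42].
  + have -> : i + (g-f) = i2 + (g'-f) by lia.
    by case: E2 => [[_ ->]|[_ ->]]; [apply: Or43 | apply: Or44].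
Qed.

Lemma cross (n : nat) (Ps : seq (seq selt)) (a c : nat) (F1 F2 : seq nat) (f g : nat) : (forall p, p \in Ps -> signed_perm n p) ->
  frontiers n Ps a c F1 -> frontiers n Ps a c F2 ->
  f \in F1 -> g \in F2 -> f < g -> conserved n Ps f g.
Proof.
move=> HP [a1 c1 r1 k1] [a2 c2 r2 k2] fF gF fg.
have := r1 _ fF; have := r2 _ gF => rg rf.
right; split => // p pP.
have us : uniq (map snd p) by rewrite (perm_uniq (HP p pP)) iota_uniq.
have C1 : conserved_in p a g.
  case: (k2 a g a2 gF (ltac:(lia))) => [[? _]|[_ H]]; [lia | exact: H].
have C2 : conserved_in p f c.
  case: (k1 f c fF c1 (ltac:(lia))) => [[? _]|[_ H]]; [lia | exact: H].
apply: (@inter p a f g c us) => //; lia.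
Qed.

Theorem lemma7 (n : nat) (Ps : seq (seq selt)) (a c : nat) (F F' : seq nat) :
  valid_family n Ps ->
  conserved n Ps a c ->
  frontiers n Ps a c F ->
  frontiers n Ps a c F' ->
  frontiers n Ps a c (F ++ F').
Proof.
move=> [n2 hd HP He] _ FF FF'.
have FF0 := FF; have FF'0 := FF'.
case: FF => [aF cF rF kF]; case: FF' => [aF' cF' rF' kF'].
split; rewrite ?mem_cat ?aF ?cF //.
- by move=> f; rewrite mem_cat => /orP[]; [apply: rF | apply: rF'].
- move=> f g; rewrite !mem_cat => /orP[] Hf /orP[] Hg fg.
  + exact: kF.
  + exact: (@cross _ _ _ _ _ _ f g HP FF0 FF'0 Hf Hg fg).
  + exact: (@cross _ _ _ _ _ _ f g HP FF'0 FF0 Hf Hg fg).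
  + exact: kF'.
Qed.
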